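(* Let $X_j$, $j\in M$, be discrete random variables with $X_j\in\{0,\dots,r_j\}$, completely independent, with strictly positive joint probability vector $\pi=p(M)$. Let $t,h\subseteq M$ be disjoint, $j_h$ a vector of categories of the variables in $h$ all different from $0$, and $a\subseteq M$. Then: (a) the column space of $P_a G_{t,h}(j_h)$ is contained in the column space of $G_r$, where $r=a\cap(t\cup h)$; (b) if $t\subseteq a$ and $a\cap h=\emptyset$, then $P_aG_{t,h}(j_h)=G_t\,P(X_h=j_h)$.
   Context: Cells are in lexicographic order. $D_\pi=\mathrm{diag}(\pi)$. For $a\subseteq M$, $X_a=\bigotimes_{j\in M}X_j$ with $X_j$ the identity of order $r_j+1$ if $j\in a$ and $X_j=\mathbf 1_{r_j+1}$ otherwise, and $P_a=X_a(X_a'D_\pi X_a)^{-1}X_a'D_\pi$. For $r\subseteq M$, $G_r=\bigotimes_{j\in M}G_j$ with $G_j$ the identity of order $r_j+1$ without its first column if $j\in r$ and $G_j=\mathbf 1_{r_j+1}$ otherwise (so $G_\emptyset=\mathbf 1$). $G_{t,h}(j_h)=\bigotimes_{j\in M}B_j$ where $B_j$ is the identity of order $r_j+1$ without its first column if $j\in t$, the unit vector of length $r_j+1$ with a $1$ in the position of category $(j_h)_j$ if $j\in h$, and $\mathbf 1_{r_j+1}$ otherwise; i.e. the submatrix of $G_{t\cup h}$ with the variables in $h$ fixed to $j_h$. *)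

(* Defs.v *)
From HB Require Import structures.
From mathcomp Require Import all_boot all_order all_algebra.
Set Implicit Arguments. Unset Strict Implicit. Unset Printing Implicit Defensive.
Import Order.TTheory GRing.Theory Num.Theory.
Local Open Scope ring_scope.

(* Variables are indexed by M = 'I_m; variable j takes values 0..r j.
   A cell (x_0,...,x_{m-1}) is identified with its index in lexicographic
   order (variable 0 most significant), i.e. the mixed-radix number
   sum_j x_j * prod_{l>j} n_l.  [digit n j i] recovers the j-th coordinate
   of the index i for radices n. *)
Definition digit (m : nat) (n : 'I_m -> nat) (j : 'I_m) (i : nat) : nat :=
  (i %/ (\prod_(l < m | (j < l)%N) n l)%N) %% n j.

Definition kron (R : nzRingType) (m : nat) (nr nc : 'I_m -> nat)
    (B : 'I_m -> nat -> nat -> R) :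
    'M[R]_((\prod_(j < m) nr j)%N, (\prod_(j < m) nc j)%N) :=
  \matrix_(i, k) \prod_(j < m) B j (digit nr j i) (digit nc j k).

Definition ncat (m : nat) (r : 'I_m -> nat) (j : 'I_m) : nat := (r j).+1.

Definition Xcols (m : nat) (r : 'I_m -> nat) (a : {set 'I_m}) (j : 'I_m) : nat :=
  if j \in a then (r j).+1 else 1%N.
Definition Xmat (R : nzRingType) (m : nat) (r : 'I_m -> nat) (a : {set 'I_m}) :=
  kron (ncat r) (Xcols r a)
    (fun j x c => if j \in a then ((x == c)%:R : R) else 1).

(* G_t : identity without its first column for j in t, 1-vector otherwise *)
Definition Gcols (m : nat) (r : 'I_m -> nat) (t : {set 'I_m}) (j : 'I_m) : nat :=
  if j \in t then r j else 1%N.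
Definition Gmat (R : nzRingType) (m : nat) (r : 'I_m -> nat) (t : {set 'I_m}) :=
  kron (ncat r) (Gcols r t)
    (fun j x c => if j \in t then ((x == c.+1)%:R : R) else 1).

Definition Gthmat (R : nzRingType) (m : nat) (r : 'I_m -> nat)
    (t h : {set 'I_m}) (jh : 'I_m -> nat) :=
  kron (ncat r) (Gcols r t)
    (fun j x c => if j \in t then ((x == c.+1)%:R : R)
                  else if j \in h then ((x == jh j)%:R : R) else 1).

Definition Pmat (R : fieldType) (m : nat) (r : 'I_m -> nat)
    (pi : 'rV[R]_((\prod_(j < m) ncat r j)%N)) (a : {set 'I_m}) :=
  let X := Xmat R r a in
  let D := diag_mx pi in
  X *m invmx (X^T *m D *m X) *m X^T *m D.

Definition prob_h (R : nzRingType) (m : nat) (r : 'I_m -> nat)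
    (pi : 'rV[R]_((\prod_(j < m) ncat r j)%N)) (h : {set 'I_m})
    (jh : 'I_m -> nat) : R :=
  \sum_(i < (\prod_(j < m) ncat r j)%N
          | [forall j in h, digit (ncat r) j i == jh j]) pi 0 i.

Definition indep (R : nzRingType) (m : nat) (r : 'I_m -> nat)
    (pi : 'rV[R]_((\prod_(j < m) ncat r j)%N)) : Prop :=
  forall i : 'I_((\prod_(j < m) ncat r j)%N),
    pi 0 i = \prod_(j < m)
      \sum_(i' < (\prod_(j < m) ncat r j)%N
              | digit (ncat r) j i' == digit (ncat r) j i) pi 0 i'.

(* Main.v *)
Require Import Defs.
From HB Require Import structures.
From mathcomp Require Import all_boot all_order all_algebra.
From mathcomp Require Import zify.
Import Order.TTheory GRing.Theory Num.Theory.
Local Open Scope ring_scope.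
Set Implicit Arguments. Unset Strict Implicit.

Lemma sum_mul_split (R : comPzRingType) (a b : nat) (G : nat -> R) :
  \sum_(0 <= i < a * b) G i = \sum_(q < a) \sum_(s < b) G (q * b + s)%N.
Proof.
elim: a => [|a IH]; first by rewrite mul0n big_ord0 big_geq.
rewrite mulSnr big_ord_recr /= (big_cat_nat (n := (a * b)%N)) ?leq_addr // IH.
congr (_ + _).
rewrite -{1}(add0n (a * b)%N) big_addn.
rewrite addKn big_mkord.
by apply: eq_bigr => s _; rewrite addnC.
Qed.

Lemma dvd_prod m (n : 'I_m -> nat) (j : 'I_m) :
  (\prod_(l < m | (j < l)%N) n l * n j %| \prod_(l < m) n l)%N.
Proof.
rewrite [(\prod_(l < m) n l)%N](bigID (fun l : 'I_m => (j < l)%N)) /=.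
have -> : (\prod_(i < m | ~~ (j < i)%N) n i = n j * \prod_(i < m | ~~ (j < i)%N && (i != j)) n i)%N.
  by rewrite (bigD1 j) ?ltnn.
by rewrite mulnA dvdn_mulr.
Qed.

Lemma prod_lift0 m (n : 'I_m.+1 -> nat) :
  (\prod_(l < m.+1 | (@ord0 m < l)%N) n l = \prod_(l < m) n (lift ord0 l))%N.
Proof.
by rewrite big_mkcond big_ord_recl /= mul1n.
Qed.

Lemma prod_liftj m (n : 'I_m.+1 -> nat) (j : 'I_m) :
  (\prod_(l < m.+1 | (lift ord0 j < l)%N) n l = \prod_(l < m | (j < l)%N) n (lift ord0 l))%N.
Proof.
rewrite big_mkcond big_ord_recl /= mul1n [RHS]big_mkcond.
by apply: eq_bigr => i _; rewrite /bump /= !add1n ltnS.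
Qed.

Lemma digit_fact_nat (R : comPzRingType) m (n : 'I_m -> nat) (F : 'I_m -> nat -> R) :
  \sum_(0 <= i < \prod_(j < m) n j) \prod_(j < m) F j (digit n j i)
  = \prod_(j < m) \sum_(y < n j) F j y.
Proof.
elim: m n F => [|m IH] n F.
  by rewrite !big_ord0 big_nat1 big_ord0.
have -> : (\prod_(j < m.+1) n j = n ord0 * \prod_(j < m) n (lift ord0 j))%N
  by rewrite big_ord_recl.
set P' := (\prod_(j < m) n (lift ord0 j))%N.
rewrite sum_mul_split [RHS]big_ord_recl.
rewrite -(IH (fun j => n (lift ord0 j)) (fun j => F (lift ord0 j))) -/P'.
rewrite big_mkord big_distrl /=.
apply: eq_bigr => q _; rewrite big_distrr /=.
apply: eq_bigr => s _; rewrite big_ord_recl.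
move: (nat_of_ord s) (ltn_ord s) => {}s sP.
have P'0 : (0 < P')%N by apply: leq_ltn_trans sP.
congr (_ * _).
  by rewrite /digit prod_lift0 -/P' divnMDl // divn_small // addn0 modn_small.
apply: eq_bigr => j _; congr (F _ _).
rewrite /digit prod_liftj.
set Q := (\prod_(l < m | (j < l)%N) n (lift ord0 l))%N.
have /dvdnP [K HK] := @dvd_prod m (fun j => n (lift ord0 j)) j.
rewrite -/P' -/Q in HK.
have Q0 : (0 < Q)%N.
  move: P'0; rewrite HK muln_gt0 => /andP [_]; rewrite muln_gt0 => /andP [].
  done.
rewrite HK mulnA mulnA -(mulnA (q * K)%N) [(Q * _)%N]mulnC mulnA divnMDl //.
by rewrite modnMDl.
Qed.

Lemma digit_fact (R : comPzRingType) m (n : 'I_m -> nat) (F : 'I_m -> nat -> R) :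
  \sum_(i < \prod_(j < m) n j) \prod_(j < m) F j (digit n j i)
  = \prod_(j < m) \sum_(y < n j) F j y.
Proof. by rewrite -digit_fact_nat big_mkord. Qed.

Lemma sum_ind (R : comPzRingType) (k z : nat) (g : nat -> R) :
  (z < k)%N -> \sum_(y < k) ((y == z :> nat)%:R * g y) = g z.
Proof.
move=> hz; rewrite (bigD1 (Ordinal hz)) //= eqxx mul1r big1 ?addr0 //.
move=> y hy; have -> : (y == z :> nat) = false by apply: negbTE.
by rewrite mul0r.
Qed.

Lemma sum_ind' (R : comPzRingType) (k z : nat) (g : nat -> R) :
  (z < k)%N -> \sum_(y < k) ((z == y :> nat)%:R * g y) = g z.
Proof.
move=> hz; rewrite -(sum_ind g hz); apply: eq_bigr => y _; by rewrite eq_sym.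
Qed.

Lemma prod_pos_each m (n : 'I_m -> nat) (j : 'I_m) :
  (0 < \prod_(l < m) n l)%N -> (0 < n j)%N.
Proof. by rewrite (bigD1 j) //= muln_gt0 => /andP []. Qed.

Lemma digit_lt m (n : 'I_m -> nat) (j : 'I_m) (i : 'I_(\prod_(l < m) n l)) :
  (digit n j i < n j)%N.
Proof.
apply: ltn_pmod; apply: (prod_pos_each (n := n)).
by apply: leq_ltn_trans (ltn_ord i).
Qed.

Lemma exists_digit m (n : 'I_m -> nat) (j : 'I_m) (y : nat) :
  (0 < \prod_(l < m) n l)%N -> (y < n j)%N ->
  exists i : 'I_(\prod_(l < m) n l), digit n j i = y.
Proof.
move=> P0 hy.
set Q := (\prod_(l < m | (j < l)%N) n l)%N.
have /dvdnP [K HK] := @dvd_prod m n j.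
rewrite -/Q in HK.
have : (0 < K * (Q * n j))%N by rewrite -HK.
rewrite !muln_gt0 => /andP [K0 /andP [Q0 _]].
have lt : (y * Q < \prod_(l < m) n l)%N.
  rewrite HK; apply: (leq_trans (n := (n j * Q)%N)); first by rewrite ltn_pmul2r.
  by rewrite mulnC leq_pmull.
exists (Ordinal lt); by rewrite /digit /= -/Q mulnK // modn_small.
Qed.

Lemma digit_inj m (n : 'I_m -> nat) (c c' : 'I_(\prod_(l < m) n l)) :
  (forall j, digit n j c = digit n j c') -> c = c'.
Proof.
move=> H; apply/eqP; apply/negPn/negP => neq.
have := digit_fact n (fun j y => ((y == digit n j c :> nat)%:R : int)).
have -> : \prod_(j < m) \sum_(y < n j) ((y == digit n j c :> nat)%:R : int) = 1.
  apply: big1 => j _.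
  have := sum_ind (fun _ => (1 : int)) (digit_lt j c).
  by under eq_bigr do rewrite mulr1.
rewrite (bigD1 c) //= (bigD1 c') /=; last by rewrite eq_sym neq.
have -> : \prod_(j < m) ((digit n j c == digit n j c :> nat)%:R : int) = 1.
  by apply: big1 => j _; rewrite eqxx.
have -> : \prod_(j < m) ((digit n j c' == digit n j c :> nat)%:R : int) = 1.
  by apply: big1 => j _; rewrite H eqxx.
set S := (X in 1 + (1 + X)).
have S0 : 0 <= S by apply: sumr_ge0 => i _; apply: prodr_ge0 => j _; apply: ler0n.
move=> E; lia.
Qed.

Definition mg (R : nzRingType) (m : nat) (r : 'I_m -> nat)
    (pi : 'rV[R]_((\prod_(j < m) ncat r j)%N)) (j : 'I_m) (y : nat) : R :=
  \sum_(i' < (\prod_(j < m) ncat r j)%N | digit (ncat r) j i' == y) pi 0 i'.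

Lemma sumpi (R : realFieldType) m (r : 'I_m -> nat)
    (pi : 'rV[R]_((\prod_(j < m) ncat r j)%N)) (F : 'I_m -> nat -> R) :
  indep pi ->
  \sum_(i < \prod_(j < m) ncat r j) (\prod_(j < m) F j (digit (ncat r) j i)) * pi 0 i
  = \prod_(j < m) \sum_(y < ncat r j) F j y * mg pi j y.
Proof.
move=> ind.
rewrite -(digit_fact (ncat r) (fun j y => F j y * mg pi j y)).
apply: eq_bigr => i _; rewrite big_split /=; congr (_ * _).
by rewrite ind.
Qed.

Lemma sum_mg (R : realFieldType) m (r : 'I_m -> nat)
    (pi : 'rV[R]_((\prod_(j < m) ncat r j)%N)) (j : 'I_m) :
  \sum_i pi 0 i = 1 -> \sum_(y < ncat r j) mg pi j y = 1.
Proof.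
move=> s1; rewrite -s1 /mg.
under eq_bigr do rewrite big_mkcond /=.
rewrite exchange_big /=; apply: eq_bigr => i _.
rewrite (bigD1 (Ordinal (digit_lt j i))) //= eqxx.
rewrite [X in _ + X]big1 ?addr0 //.
move=> y hy; have -> : (digit (ncat r) j i == y :> nat) = false.
  by apply/negbTE; rewrite eq_sym.
done.
Qed.

Lemma mg_pos (R : realFieldType) m (r : 'I_m -> nat)
    (pi : 'rV[R]_((\prod_(j < m) ncat r j)%N)) (j : 'I_m) (y : nat) :
  (forall i, 0 < pi 0 i) -> (y < ncat r j)%N -> 0 < mg pi j y.
Proof.
move=> pos hy.
have P0 : (0 < \prod_(l < m) ncat r l)%N by apply: prodn_gt0.
have [i hi] := exists_digit P0 hy.
rewrite /mg (bigD1 i) /=; last by rewrite hi.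
apply: (lt_le_trans (pos i)); rewrite lerDl.
by apply: sumr_ge0 => k _; apply: ltW.
Qed.

Lemma Xmat_E (R : realFieldType) m (r : 'I_m -> nat) (a : {set 'I_m}) i c :
  Xmat R r a i c = \prod_(j < m) (if j \in a then
     ((digit (ncat r) j i == digit (Xcols r a) j c :> nat)%:R : R) else 1).
Proof. by rewrite mxE. Qed.

Lemma digitX_lt m (r : 'I_m -> nat) (a : {set 'I_m}) j c :
  j \in a -> (digit (Xcols r a) j c < ncat r j)%N.
Proof.
move=> hj; rewrite /digit.
have -> : Xcols r a j = ncat r j by rewrite /Xcols hj.
exact: ltn_pmod.
Qed.

Lemma digitX_0 m (r : 'I_m -> nat) (a : {set 'I_m}) j c :
  j \notin a -> digit (Xcols r a) j c = 0%N.
Proof.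
move=> hj; rewrite /digit.
have -> : Xcols r a j = 1%N by rewrite /Xcols (negbTE hj).
exact: modn1.
Qed.

Lemma PV (R : realFieldType) m (r : 'I_m -> nat)
    (pi : 'rV[R]_((\prod_(j < m) ncat r j)%N)) (a : {set 'I_m})
    (nc : 'I_m -> nat) (B : 'I_m -> nat -> nat -> R) :
  (forall i, 0 < pi 0 i) -> \sum_i pi 0 i = 1 -> indep pi ->
  Pmat pi a *m kron (ncat r) nc B =
  \matrix_(i, k) \prod_(j < m) (if j \in a then B j (digit (ncat r) j i) (digit nc j k)
       else \sum_(y < ncat r j) mg pi j y * B j y (digit nc j k)).
Proof.
move=> pos s1 ind.
set X := Xmat R r a.
set V := kron (ncat r) nc B.
set W := X^T *m diag_mx pi *m X.
pose q := \row_(c < \prod_(j < m) Xcols r a j)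
   \prod_(j < m) (if j \in a then mg pi j (digit (Xcols r a) j c) else 1).
have HW : W = diag_mx q.
  apply/matrixP => c c'; rewrite !mxE.
  pose F := fun j y => if j \in a then
        (y == digit (Xcols r a) j c :> nat)%:R * (y == digit (Xcols r a) j c' :> nat)%:R
        else (1 : R).
  transitivity (\sum_(i < \prod_(j < m) ncat r j)
    (\prod_(j < m) F j (digit (ncat r) j i)) * pi 0 i).
    apply: eq_bigr => i _; rewrite mul_mx_diag !mxE mulrAC -big_split /=.
    rewrite /F; congr (_ * _); apply: eq_bigr => j _; by case: (j \in a); rewrite ?mulr1.
  rewrite (sumpi F ind) /F.
  have [<-|neq] := eqVneq c c'.
    rewrite mulr1n; apply: eq_bigr => j _.
    case: (boolP (j \in a)) => hj.
      rewrite -[RHS](sum_ind (mg pi j) (@digitX_lt _ r a j c hj)).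
      by apply: eq_bigr => y _; case: (_ == _); rewrite ?mulr1 ?mul0r.
    by under eq_bigr do rewrite mul1r; rewrite sum_mg.
  rewrite mulr0n.
  have [j hj hd] : exists2 j, j \in a & digit (Xcols r a) j c != digit (Xcols r a) j c'.
    case: (boolP [exists j in a, digit (Xcols r a) j c != digit (Xcols r a) j c'])
      => [/exists_inP //| /exists_inPn H].
    case/negP: neq; apply/eqP; apply: digit_inj => j.
    case: (boolP (j \in a)) => hj; first by apply/eqP/negPn; apply: H.
    by rewrite !digitX_0.
  rewrite (bigD1 j) //= hj big1 ?mul0r //.
  move=> y _; case: (eqVneq (y : nat) (digit (Xcols r a) j c)) => [->|ne].
    by rewrite ?eqxx (negbTE hd) mulr0 mul0r.
  by rewrite ?(negbTE ne) !mul0r.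
have Wu : W \in unitmx.
  rewrite HW unitmxE det_diag unitfE; apply: lt0r_neq0.
  apply: prodr_gt0 => c _; rewrite mxE; apply: prodr_gt0 => j _.
  case: (boolP (j \in a)) => hj; last exact: ltr01.
  exact: mg_pos (@digitX_lt _ r a j c hj).
pose S' := fun j k => \sum_(y < ncat r j) mg pi j y * B j y (digit nc j k).
pose C := \matrix_(c < \prod_(j < m) Xcols r a j, k < \prod_(j < m) nc j)
   \prod_(j < m) (if j \in a then B j (digit (Xcols r a) j c) (digit nc j k) else S' j k).
have HT : X^T *m diag_mx pi *m V = W *m C.
  apply/matrixP => c k; rewrite HW mul_diag_mx !mxE.
  pose F := fun j y => (if j \in a then
        (y == digit (Xcols r a) j c :> nat)%:R else 1) * B j y (digit nc j k).
  transitivity (\sum_(i < \prod_(j < m) ncat r j)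
    (\prod_(j < m) F j (digit (ncat r) j i)) * pi 0 i).
    apply: eq_bigr => i _; rewrite mul_mx_diag !mxE mulrAC -big_split /=.
    rewrite /F; congr (_ * _); apply: eq_bigr => j _; by case: (j \in a).
  rewrite (sumpi F ind) /F -big_split /=; apply: eq_bigr => j _.
  case: (boolP (j \in a)) => hj.
    rewrite -(sum_ind (fun y => mg pi j y * B j y (digit nc j k)) (@digitX_lt _ r a j c hj)).
    by apply: eq_bigr => y _; rewrite -mulrA (mulrC (B _ _ _)).
  by rewrite mul1r /S'; apply: eq_bigr => y _; rewrite mul1r mulrC.
have -> : Pmat pi a *m V = X *m (invmx W *m (X^T *m diag_mx pi *m V)).
  by rewrite /Pmat !mulmxA.
rewrite HT mulKmx //.
apply/matrixP => i k; rewrite !mxE.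
pose H := fun j y => (if j \in a then
        (digit (ncat r) j i == y :> nat)%:R else 1) *
        (if j \in a then B j y (digit nc j k) else S' j k).
transitivity (\sum_(c < \prod_(j < m) Xcols r a j)
   \prod_(j < m) H j (digit (Xcols r a) j c)).
  apply: eq_bigr => c _; rewrite !mxE -big_split /=.
  by apply: eq_bigr => j _; rewrite /H; case: (j \in a).
rewrite (digit_fact (Xcols r a) H) /H; apply: eq_bigr => j _.
case: (boolP (j \in a)) => hj.
  have := sum_ind' (fun y => B j y (digit nc j k)) (@digit_lt _ (ncat r) j i).
  by rewrite /Xcols hj.
have -> : Xcols r a j = 1%N by rewrite /Xcols (negbTE hj).
by rewrite big_ord1 mul1r.
Qed.

Lemma prob_hE (R : realFieldType) m (r : 'I_m -> nat)
    (pi : 'rV[R]_((\prod_(j < m) ncat r j)%N)) (h : {set 'I_m}) (jh : 'I_m -> nat) :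
  \sum_i pi 0 i = 1 -> indep pi ->
  (forall j, j \in h -> (0 < jh j <= r j)%N) ->
  prob_h pi h jh = \prod_(j < m) (if j \in h then mg pi j (jh j) else 1).
Proof.
move=> s1 ind hjh.
pose F := fun j y => if j \in h then ((y == jh j :> nat)%:R : R) else 1.
rewrite /prob_h big_mkcond /=.
transitivity (\sum_(i < \prod_(j < m) ncat r j)
    (\prod_(j < m) F j (digit (ncat r) j i)) * pi 0 i).
  apply: eq_bigr => i _.
  case: (boolP [forall j in h, digit (ncat r) j i == jh j]) =>
    [/forall_inP H | /forall_inPn [j hj hne]].
    suff -> : \prod_(j < m) F j (digit (ncat r) j i) = 1 by rewrite mul1r.
    apply: big1 => j _; rewrite /F.
    by case: (boolP (j \in h)) => hj //; rewrite H.
  by rewrite (bigD1 j) //= /F hj (negbTE hne) !mul0r.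
rewrite (sumpi F ind) /F; apply: eq_bigr => j _.
case: (boolP (j \in h)) => hj.
  have /andP [_ hl] := hjh j hj.
  rewrite -(sum_ind (mg pi j) (_ : (jh j < ncat r j)%N)) ?ltnS //.
by under eq_bigr do rewrite mul1r; rewrite sum_mg.
Qed.

Lemma sum_ind2 (R : comPzRingType) (K z x : nat) :
  (z < K)%N ->
  \sum_(y < K) (((x == y.+1 :> nat)%:R : R) * (y == z :> nat)%:R) = (x == z.+1 :> nat)%:R.
Proof.
move=> hz; rewrite -(sum_ind (fun y => ((x == y.+1 :> nat)%:R : R)) hz).
by apply: eq_bigr => y _; rewrite mulrC.
Qed.

Unset Implicit Arguments.

Theorem lemma7 (R : realFieldType) (m : nat) (r : 'I_m -> nat)
    (pi : 'rV[R]_((\prod_(j < m) ncat r j)%N))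
    (t h a : {set 'I_m}) (jh : 'I_m -> nat) :
  (forall i, 0 < pi 0 i) ->
  \sum_i pi 0 i = 1 ->
  indep pi ->
  [disjoint t & h] ->
  (forall j, j \in h -> (0 < jh j <= r j)%N) ->
  ((Pmat pi a *m Gthmat R r t h jh)^T <= (Gmat R r (a :&: (t :|: h)))^T)%MS /\
  (t \subset a -> [disjoint a & h] ->
     Pmat pi a *m Gthmat R r t h jh = prob_h pi h jh *: Gmat R r t).
Proof.
move=> pos s1 ind dth hjh.
pose B := fun j x c => if j \in t then ((x == c.+1)%:R : R)
                  else if j \in h then ((x == jh j)%:R : R) else 1.
have -> : Gthmat R r t h jh = kron (ncat r) (Gcols r t) B by [].
rewrite (@PV R m r pi a (Gcols r t) B pos s1 ind).
split.
  pose rs := a :&: (t :|: h).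
  pose tgt := fun j (k : nat) => if j \in t then digit (Gcols r t) j k else (jh j).-1.
  pose S' := fun j k => \sum_(y < ncat r j) mg pi j y * B j y (digit (Gcols r t) j k).
  pose K := fun k => \prod_(j < m) (if j \in a then 1 else S' j k).
  pose E := \matrix_(k' < \prod_(j < m) Gcols r rs j, k < \prod_(j < m) Gcols r t j)
     ((\prod_(j < m) (if j \in rs then ((digit (Gcols r rs) j k' == tgt j k :> nat)%:R : R)
         else 1)) * K k).
  set Y := \matrix_(i, k) _.
  have -> : Y = Gmat R r rs *m E; last by rewrite trmx_mul submxMl.
  apply/matrixP => i k; rewrite !mxE.
  pose HH := fun j y => if j \in rs then
     ((digit (ncat r) j i == y.+1 :> nat)%:R : R) * (y == tgt j k :> nat)%:R else 1.
  transitivity ((\sum_(k' < \prod_(j < m) Gcols r rs j)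
       \prod_(j < m) HH j (digit (Gcols r rs) j k')) * K k); last first.
    rewrite big_distrl /=; apply: eq_bigr => k' _; rewrite !mxE mulrA.
    congr (_ * _); rewrite -big_split /=.
    by apply: eq_bigr => j _; rewrite /HH; case: (j \in rs); rewrite ?mulr1.
  rewrite (digit_fact (Gcols r rs) HH) /K -big_split /=; apply: eq_bigr => j _.
  rewrite /HH /B /rs /tgt /Gcols !inE.
  have kt : (0 < \prod_(l < m) Gcols r t l)%N by apply: leq_ltn_trans (ltn_ord k).
  case: (boolP (j \in a)) => ja /=.
    case: (boolP (j \in t)) => jt /=.
      rewrite mulr1 sum_ind2 //.
      have := @digit_lt _ (Gcols r t) j k; by rewrite /Gcols jt.
    case: (boolP (j \in h)) => jhh /=.
      have /andP [h0 hl] := hjh j jhh.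
      by rewrite mulr1 sum_ind2 ?prednK // (leq_trans _ hl) // ltn_predL.
    by rewrite big_ord1 mulr1.
  by rewrite big_ord1 mul1r.
move=> ta dah.
apply/matrixP => i k; rewrite !mxE (prob_hE s1 ind hjh) -big_split /=.
apply: eq_bigr => j _; rewrite /B.
case: (boolP (j \in a)) => ja.
  case: (boolP (j \in t)) => jt.
    by rewrite (disjointFr dth jt) mul1r.
  by rewrite (disjointFr dah ja) mulr1.
have jt : (j \in t) = false by apply/negbTE; apply: contra ja; apply: (subsetP ta).
rewrite jt mulr1.
case: (boolP (j \in h)) => jhh.
  have /andP [_ hl] := hjh j jhh.
  rewrite -(sum_ind (mg pi j) (_ : (jh j < ncat r j)%N)) ?ltnS //.
  by apply: eq_bigr => y _; rewrite mulrC.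
by under eq_bigr do rewrite mulr1; rewrite sum_mg.
Qed.
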